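(* There exists an absolute constant $C>0$ such that every finite simple graph $G$ with $n$ vertices and at least one edge satisfies \[ \Gamma(G) \leq C\,\lambda_1(G)\left(\frac{n}{\lambda_1(G)}\right)^{1/3}, \] where $\lambda_1(G)$ is the largest eigenvalue of the adjacency matrix of $G$ and $\Gamma(G)$ is the Grundy number of $G$.
   Context: Given an ordering $(x_1,\dots,x_n)$ of $V(G)$, the first-fit coloring algorithm colors $x_i$ with the smallest positive integer not used on the neighbors of $x_i$ among $x_1,\dots,x_{i-1}$. The Grundy number $\Gamma(G)$ is the largest number of colors used by the first-fit algorithm over all vertex orderings. *)

(* Defs.v *)
From HB Require Import structures.
From mathcomp Require Import all_boot all_order all_algebra perm.
From mathcomp Require Import reals Rstruct exp.
Notation R := Rdefinitions.R.
Set Implicit Arguments. Unset Strict Implicit. Unset Printing Implicit Defensive.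
Import Order.TTheory GRing.Theory Num.Theory.

Definition simple_graph (n : nat) (e : rel 'I_n) : Prop :=
  symmetric e /\ irreflexive e.

(* Smallest positive integer not in [used]; it lies in 1 .. size used + 1. *)
Definition first_free (used : seq nat) : nat :=
  head 0%N [seq k <- iota 1 (size used).+1 | k \notin used].

(* First-fit along an ordering.  [c] is the colouring so far (only vertices in
   [pre], the already processed ones, are meaningful); the next vertex x gets
   the smallest positive colour not used on its neighbours among [pre]. *)
Fixpoint first_fit_aux (n : nat) (e : rel 'I_n) (c : 'I_n -> nat)
    (pre : seq 'I_n) (s : seq 'I_n) : 'I_n -> nat :=
  match s with
  | [::] => c
  | x :: s' =>
      let k := first_free [seq c y | y <- pre & e x y] in
      first_fit_aux e (fun z => if z == x then k else c z) (rcons pre x) s'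
  end.

Definition first_fit (n : nat) (e : rel 'I_n) (s : seq 'I_n) : 'I_n -> nat :=
  first_fit_aux e (fun _ => 0%N) [::] s.

Definition ff_num_colors (n : nat) (e : rel 'I_n) (s : seq 'I_n) : nat :=
  size (undup [seq first_fit e s x | x <- s]).

Definition grundy (n : nat) (e : rel 'I_n) : nat :=
  \max_(p : 'S_n) ff_num_colors e [seq p i | i <- enum 'I_n].

Definition adjmx (n : nat) (e : rel 'I_n) : 'M[R]_n :=
  \matrix_(i, j) (e i j)%:R%R.

Definition largest_eigenvalue (n : nat) (A : 'M[R]_n) (lam : R) : Prop :=
  eigenvalue A lam /\ (forall mu : R, eigenvalue A mu -> mu <= lam)%R.

(* Main.v *)
Require Import Defs.
From HB Require Import structures.
From mathcomp Require Import all_boot all_order all_algebra perm.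
From mathcomp Require Import reals Rstruct exp.
From mathcomp Require Import mxred sesquilinear spectral complex.
From mathcomp Require Import zify ring lra.
Import Order.TTheory GRing.Theory Num.Theory.

Section Ray.
Local Open Scope ring_scope.
Variable F : rcfType.
Local Notation f := (real_complex F).

Lemma conj_realc (b : F) : Num.conj (f b) = f b.
Proof. by apply: conj_Creal; rewrite complex_real. Qed.

Lemma map_conj_real m p (B : 'M[F]_(m, p)) :
  map_mx Num.conj (map_mx f B) = map_mx f B.
Proof. by apply/matrixP => i j; rewrite !mxE conj_realc. Qed.

Lemma rayleigh n (A : 'M[F]_n) (lam : F) :
  A^T = A -> (forall mu, eigenvalue A mu -> mu <= lam) ->
  forall x : 'rV[F]_n, (x *m A *m x^T) 0 0 <= lam * (x *m x^T) 0 0.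
Proof.
move=> Asym Hlam x.
set Ac := map_mx f A.
have Aherm : Ac \is hermsymmx.
  apply/is_hermitianmxP; rewrite expr0 scale1r.
  apply/matrixP => i j; rewrite !mxE conj_realc.
  by rewrite -[in LHS]Asym mxE.
have /orthomx_spectralP AE := hermitian_normalmx Aherm.
set P := spectralmx Ac in AE; set D := spectral_diag Ac in AE.
have PU : P \is unitarymx by apply: spectral_unitarymx.
have PV : invmx P = (P ^t*)%sesqui by apply: invmx_unitary.
have Punit : P \in unitmx by apply: spectral_unit.
have Dreal : D \is a mxOver Num.real by apply: hermitian_spectral_diag_real.
have Dle : forall i, D 0 i <= f lam.
  move=> i; have Dir : D 0 i \is Num.real by move/mxOverP: Dreal; apply.
  rewrite -(RRe_real Dir) lecR; apply: Hlam.
  have : eigenvalue Ac (D 0 i).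
    apply/eigenvalueP; exists (row i P).
      rewrite -row_mul.
      have -> : P *m Ac = diag_mx D *m P.
        by rewrite AE !mulmxA mulmxV // mul1mx.
      by rewrite mul_diag_mx; apply/rowP => j; rewrite !mxE.
    apply/eqP => H0; have := unitarymxP PU.
    move/(congr1 (fun M => (row i M) 0 i)); rewrite row_mul H0 mul0mx !mxE eqxx.
    by move/eqP; rewrite eq_sym oner_eq0.
  by rewrite -(RRe_real Dir) !eigenvalue_root_char -map_char_poly fmorph_root.
suff key : f ((x *m A *m x^T) 0 0) <= f (lam * (x *m x^T) 0 0) by rewrite lecR in key.
set xc := map_mx f x.
have Xc : (xc ^t*)%sesqui = map_mx f x^T by rewrite map_trmx map_conj_real.
set y := xc *m (P ^t*)%sesqui.
have Py : P *m (xc ^t*)%sesqui = (y ^t*)%sesqui.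
  by rewrite /y trmx_mul map_mxM trmxCK.
have E1 : f ((x *m A *m x^T) 0 0) = (y *m diag_mx D *m (y ^t*)%sesqui) 0 0.
  have -> : f ((x *m A *m x^T) 0 0) = (xc *m Ac *m (xc^t*)%sesqui) 0 0.
    by rewrite Xc /xc /Ac -!(map_mxM (real_complex F)) [RHS]mxE.
  by rewrite AE PV -Py /y !mulmxA.
have E2 : f ((x *m x^T) 0 0) = (y *m (y ^t*)%sesqui) 0 0.
  have -> : f ((x *m x^T) 0 0) = (xc *m (xc^t*)%sesqui) 0 0.
    by rewrite Xc /xc -!(map_mxM (real_complex F)) [RHS]mxE.
  by rewrite -Py /y !mulmxA -(mulmxA xc) -PV mulVmx // mulmx1.
rewrite E1 rmorphM /= E2; clearbody y.
rewrite mul_mx_diag !mxE mulr_sumr; apply: ler_sum => j _; rewrite !mxE.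
rewrite mulrAC [X in _ <= X]mulrC; apply: ler_wpM2l; [exact: mul_conjC_ge0 | exact: Dle].
Qed.
End Ray.


Section Comb.
Variables (n : nat) (e : rel 'I_n).

Lemma first_free_le used : first_free used <= (size used).+1.
Proof.
rewrite /first_free.
have H : forall l, {subset l <= iota 1 (size used).+1} -> head 0 l <= (size used).+1.
  case=> [|a l] // Hs; have := Hs a (mem_head _ _); rewrite mem_iota /=; lia.
by apply: H => k; rewrite mem_filter => /andP[].
Qed.

Lemma ff_out c pre s x : x \notin s -> first_fit_aux e c pre s x = c x.
Proof.
elim: s c pre => [|y s IH] c pre //=; rewrite in_cons negb_or => /andP[xy xs].
by rewrite IH // (negPf xy).
Qed.

Lemma ff_bound c pre s x : uniq (pre ++ s) -> x \in s ->
  first_fit_aux e c pre s x <= #|e x|.+1.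
Proof.
elim: s c pre => [|y s IH] c pre //= U.
rewrite in_cons => /orP[/eqP -> | xs]; last first.
  by apply: IH => //; rewrite cat_rcons.
have [Upre /andP [ys _]] : uniq pre /\ uniq (y :: s).
  by move: U; rewrite cat_uniq => /andP[-> /andP[_ ->]].
rewrite ff_out // eqxx; apply: (leq_trans (first_free_le _)).
rewrite size_map ltnS cardE; apply: uniq_leq_size; first exact: filter_uniq.
by move=> z; rewrite mem_filter mem_enum => /andP[].
Qed.

Lemma sum_undup_le (t : seq nat) (h : nat -> nat) :
  \sum_(c <- undup t) h c <= \sum_(c <- t) h c.
Proof.
elim: t => [|a t IH] //=; case: ifP => _; rewrite !big_cons.
  exact: leq_trans IH (leq_addl _ _).
by rewrite leq_add2l.
Qed.

Lemma sorted_nth_ge (t : seq nat) j : sorted ltn t -> j < size t -> j <= nth 0 t j.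
Proof.
have H : forall t b, path ltn b t -> forall j, j < size t -> b + j < nth 0 t j.
  elim=> [|a t' IH] b //= /andP[ba pt] [|j0] //=; first by rewrite addn0.
  move=> js; have := IH a pt j0 js; lia.
case: t => [|a t'] //= pt; case: j => [|j] //= js.
by have := H t' a pt j js; lia.
Qed.

Lemma sum_uniq_ge (u : seq nat) (h : nat -> nat) : {homo h : a b / a <= b} ->
  uniq u -> \sum_(j < size u) h j <= \sum_(c <- u) h c.
Proof.
move=> hmono Uu.
rewrite -(perm_big _ (permEl (perm_sort leq u))) /= (big_nth 0) -(size_sort leq u) big_mkord.
apply: leq_sum => i _; apply: hmono; apply: sorted_nth_ge => //.
by rewrite ltn_sorted_uniq_leq sort_uniq Uu sort_sorted //; exact: leq_total.
Qed.

Lemma cube_bound k : k ^ 3 <= 27 * \sum_(j < k) (j.-1) ^ 2 + 8.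
Proof.
elim: k => [|k IH] //; rewrite big_ord_recr /=.
case: k IH => [|[|m]] IH /=; rewrite mulnDr //; move: IH; set S := \sum_(j < _) _; rewrite !expnS !expn0 !muln1; nia.
Qed.

Definition deg (x : 'I_n) := #|e x|.

Lemma ff_colors_bound (p : 'S_n) :
  (ff_num_colors e [seq p i | i <- enum 'I_n]) ^ 3 <=
     27 * \sum_(v : 'I_n) deg v ^ 2 + 8.
Proof.
set s := [seq p i | i <- enum 'I_n].
set f := first_fit e s.
have Us : uniq s by rewrite map_inj_uniq ?enum_uniq //; exact: perm_inj.
have fb : forall v, f v <= (deg v).+1.
  move=> v; apply: ff_bound => //; apply/mapP; exists (p^-1 v)%g.
    by rewrite mem_enum. by rewrite permKV.
apply: (leq_trans (cube_bound _)); rewrite leq_add2r leq_mul2l; apply/orP; right.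
apply: (@leq_trans (\sum_(v : 'I_n) ((f v).-1) ^ 2)); last first.
  apply: leq_sum => v _; rewrite leq_exp2r //; have := fb v; lia.
have -> : \sum_(v : 'I_n) ((f v).-1) ^ 2 = \sum_(c <- [seq f v | v <- s]) (c.-1) ^ 2.
  rewrite big_map /s big_map big_enum /=.
  by rewrite (reindex_inj (@perm_inj _ p)).
apply: (leq_trans _ (sum_undup_le _ _)); apply: sum_uniq_ge; last exact: undup_uniq.
by move=> a b ab; rewrite leq_exp2r //; lia.
Qed.

Lemma grundy_bound : (grundy e) ^ 3 <= 27 * \sum_(v : 'I_n) deg v ^ 2 + 8.
Proof.
rewrite /grundy; apply: (big_ind (fun m => m ^ 3 <= _)) => //.
  move=> a b Ha Hb; have [->|->] : maxn a b = a \/ maxn a b = b by lia.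
  by []. by [].
by move=> p _; exact: ff_colors_bound.
Qed.
End Comb.


Local Open Scope ring_scope.

Lemma quad_form n (A : 'M[R]_n) (x : 'I_n -> R) :
  ((\row_i x i) *m A *m (\row_i x i)^T) 0 0 = \sum_j (\sum_i x i * A i j) * x j.
Proof. by rewrite !mxE; apply: eq_bigr => j _; rewrite !mxE; congr (_ * _); apply: eq_bigr => i _; rewrite !mxE. Qed.

Lemma quad_norm n (x : 'I_n -> R) :
  ((\row_i x i) *m (\row_i x i)^T) 0 0 = \sum_j x j ^+ 2.
Proof. by rewrite !mxE; apply: eq_bigr => j _; rewrite !mxE expr2. Qed.

Theorem corollary1 :
  exists C : R, 0 < C /\
    forall (n : nat) (e : rel 'I_n),
      simple_graph e -> (exists i j, e i j) ->
      forall lam : R, largest_eigenvalue (adjmx e) lam ->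
        (grundy e)%:R <= C * lam * ((n%:R / lam) `^ (3%:R)^-1).
Proof.
exists 9%:R; split; first by rewrite ltr0n.
move=> n e [esym eirr] [i0 [j0 e0]] lam [lam_eig lam_max].
set A := adjmx e.
have Asym : A^T = A by apply/matrixP => i j; rewrite !mxE esym.
have Ray := @rayleigh R n A lam Asym lam_max.
have rowsum : forall i, \sum_j A i j = (@deg n e i)%:R.
  move=> i; rewrite /deg -sum1_card natr_sum [RHS]big_mkcond /=; apply: eq_bigr => j _.
  by rewrite /A !mxE unfold_in; case: (e i j).
have Ange : forall i j, 0 <= A i j by move=> i j; rewrite /A mxE ler0n.
set S := \sum_i (@deg n e i ^ 2)%N.
have S1 : (1 <= S)%N.
  have : (1 <= @deg n e i0)%N by rewrite /deg; apply/card_gt0P; exists j0.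
  rewrite /S (bigD1 i0) //=; nia.
have D1 : (1 <= \sum_i @deg n e i)%N.
  have : (1 <= @deg n e i0)%N by rewrite /deg; apply/card_gt0P; exists j0.
  rewrite (bigD1 i0) //=; lia.
have lam_pos : 0 < lam.
  have := Ray (\row_i 1); rewrite quad_form quad_norm.
  under eq_bigr do rewrite big_distrl /=.
  rewrite exchange_big /=.
  under eq_bigr do under eq_bigr do rewrite mul1r mulr1.
  under eq_bigr do rewrite rowsum.
  under [X in _ <= lam * X]eq_bigr do rewrite expr1n.
  rewrite -natr_sum sumr_const card_ord => H.
  have H1 : 1 <= ((\sum_i @deg n e i)%N)%:R :> R by rewrite ler1n.
  have Hn : 0 <= n%:R :> R by [].
  nra.
set d := fun i => (@deg n e i)%:R : R.
have d0 : forall i, 0 <= d i by move=> i; rewrite /d ler0n.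
set s := 4%:R * lam.
have s0 : 0 <= s by rewrite /s; nra.
have H := Ray (\row_i (s + d i)); rewrite quad_form quad_norm in H.
have L : s * \sum_i d i ^+ 2 <= \sum_j (\sum_i (s + d i) * A i j) * (s + d j).
  rewrite mulr_sumr.
  have -> : \sum_i s * d i ^+ 2 = \sum_j \sum_i s * d i * A i j.
    rewrite exchange_big; apply: eq_bigr => i _ /=; rewrite -mulr_sumr rowsum.
    by rewrite /d expr2 mulrA.
  apply: ler_sum => j _; rewrite big_distrl; apply: ler_sum => i _ /=.
  have P : s * d i <= (s + d i) * (s + d j) by have := d0 i; have := d0 j; nra.
  by rewrite [_ * A i j * _]mulrAC; apply: ler_wpM2r => //; exact: Ange.
have U : \sum_j (s + d j) ^+ 2 <= 2%:R * (n%:R * s ^+ 2 + \sum_j d j ^+ 2).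
  apply: (@le_trans _ _ (\sum_j (2%:R * s ^+ 2 + 2%:R * d j ^+ 2))).
    apply: ler_sum => j _; rewrite -subr_ge0.
    have -> : 2%:R * s ^+ 2 + 2%:R * d j ^+ 2 - (s + d j) ^+ 2 = (s - d j) ^+ 2 by ring.
    exact: sqr_ge0.
  rewrite big_split /= sumr_const card_ord -mulr_sumr -mulr_natl.
  rewrite mulrDr; apply: lerD; last by [].
  by rewrite -mulr_natl; nra.
set S2 := \sum_j d j ^+ 2 in L U.
have S2E : S2 = S%:R by rewrite /S2 /S natr_sum; apply: eq_bigr => i _; rewrite natrX.
have S2le : S2 <= 16%:R * n%:R * lam ^+ 2.
  have H2 : s * S2 <= lam * (2%:R * (n%:R * s ^+ 2 + S2)).
    apply: (le_trans L); apply: (le_trans H); apply: ler_wpM2l => //; exact: ltW.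
  rewrite /s in H2; nra.
have K : ((grundy e)%:R : R) ^+ 3 <= 35%:R * S2.
  rewrite S2E -natrX -natrM ler_nat; have := @grundy_bound n e; rewrite -/S; lia.
set t := (n%:R / lam) `^ (3%:R)^-1.
have t0 : 0 <= t by apply: powR_ge0.
have t3 : t ^+ 3 = n%:R / lam.
  rewrite /t -powR_mulrn ?powR_ge0 // -powRrM mulVf ?pnatr_eq0 // powRr1 //.
  by apply: divr_ge0 => //; exact: ltW.
rewrite -(@ler_pXn2r _ 3) // ?inE /=; last first.
  - by apply: mulr_ge0 => //; apply: mulr_ge0 => //; exact: ltW.
  - by rewrite nnegrE ler0n.
rewrite !exprMn t3.
have -> : (9%:R : R) ^+ 3 * lam ^+ 3 * (n%:R / lam) = 729%:R * lam ^+ 2 * n%:R.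
  by field; rewrite gt_eqF.
have P : 0 <= n%:R * lam ^+ 2 by apply: mulr_ge0 => //; exact: sqr_ge0.
apply: (le_trans K); apply: (le_trans (ler_wpM2l _ S2le)) => //.
nra.
Qed.
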